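(* Let $C\in\mathbb{R}^{n\times n}$ be invertible and consider the utility $U(\theta,\omega) = \theta^T C\omega + U'(\theta,\omega)$, where $U'$ is differentiable and satisfies, at every point $(\theta,\omega)$ at which it is evaluated by the dynamics below, $$\left\|\begin{bmatrix}\nabla_\theta U'(\theta,\omega)\\ \nabla_\omega U'(\theta,\omega)\end{bmatrix}\right\|_2 \le \alpha := c\, r^{1/3} m^{-1/6} H^{5/2} \log^{1/2} m,$$ for a constant $c>0$, where $m$ is the width and $H$ the depth of the neural networks parameterizing the players and $r$ bounds the distance of the weights from their initialization. Let $(\theta_t,\omega_t)_{t\ge 0}$ be a sequence satisfying the Implicit Update (IU) dynamics $$\theta_{t+1} = \theta_t - \eta\nabla_\theta U(\theta_{t+1},\omega_{t+1}),\qquad \omega_{t+1} = \omega_t + \eta\nabla_\omega U(\theta_{t+1},\omega_{t+1})$$ with step size $\eta = 1/\sqrt{\lambda_{\max}(CC^T)}$. Then the IU dynamics converges to a neighborhood of the optimum $(0,0)$ of size $$O\!\left(\frac{1}{1-1/\sqrt{2}}\, r^{1/3} m^{-1/6} H^{5/2}\log^{1/2} m\, \frac{\sqrt{\lambda_{\max}(CC^T)}}{\lambda_{\min}(CC^T)}\right),$$ i.e. $\limsup_{t\to\infty}\left\|\begin{bmatrix}\theta_t\\ \omega_t\end{bmatrix}\right\|_2$ is bounded by a quantity of this order.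
   Context: Setting: both players of a GAN-type min-max game are overparameterized neural networks; after the reduction of a game linear in both players to the form $\theta^T C\omega$ (with $C$ invertible, equilibrium at the origin), the finite-width utility is $\theta^T C\omega$ plus a perturbation $U'$ whose gradient is bounded by the neural-tangent-kernel linearization error $O(r^{1/3}m^{-1/6}H^{5/2}\log^{1/2}m)$ (which holds with probability at least $1-e^{-\Omega(\log^2 m)}$ for networks of depth $H$ and sufficiently large width $m$ whose weights stay within distance $r$ of initialization). $\theta$ is the minimizing player and $\omega$ the maximizing player. $\lambda_{\max}(\cdot),\lambda_{\min}(\cdot)$ denote largest and smallest eigenvalues. *)

(* Defs.v *)
From HB Require Import structures.
From mathcomp Require Import all_boot all_order all_algebra.
From mathcomp Require Import all_classical all_reals all_analysis.
Set Implicit Arguments. Unset Strict Implicit. Unset Printing Implicit Defensive.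
Import Order.TTheory GRing.Theory Num.Theory.
Import numFieldNormedType.Exports.
Local Open Scope ring_scope.

Definition norm2 (R : realType) (n : nat) (v : 'rV[R]_n) : R :=
  Num.sqrt (\sum_(i < n) (v ord0 i) ^+ 2).

Definition grad (R : realType) (n : nat) (f : 'rV[R]_n -> R) (x : 'rV[R]_n)
  : 'rV[R]_n :=
  \row_(i < n) ('D_(delta_mx ord0 i) f x).

Definition grad_theta (R : realType) (n : nat) (U : 'rV[R]_n -> 'rV[R]_n -> R)
  (th om : 'rV[R]_n) : 'rV[R]_n := grad (fun x => U x om) th.
Definition grad_omega (R : realType) (n : nat) (U : 'rV[R]_n -> 'rV[R]_n -> R)
  (th om : 'rV[R]_n) : 'rV[R]_n := grad (fun y => U th y) om.

Definition is_lambda_max (R : realType) (n : nat) (A : 'M[R]_n) (l : R) : Prop :=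
  eigenvalue A l /\ (forall a, eigenvalue A a -> a <= l).
Definition is_lambda_min (R : realType) (n : nat) (A : 'M[R]_n) (l : R) : Prop :=
  eigenvalue A l /\ (forall a, eigenvalue A a -> l <= a).

Definition utility (R : realType) (n : nat) (C : 'M[R]_n)
  (U' : 'rV[R]_n -> 'rV[R]_n -> R) (th om : 'rV[R]_n) : R :=
  (th *m C *m om^T) ord0 ord0 + U' th om.

Definition ntk_rate (R : realType) (r : R) (m H : nat) : R :=
  r `^ (1 / 3) * (m%:R) `^ (- (1 / 6)) * (H%:R) `^ (5 / 2)
    * Num.sqrt (ln (m%:R : R)).

(* Main.v *)
Require Import Defs.
From HB Require Import structures.
From mathcomp Require Import all_boot all_order all_algebra.
From mathcomp Require Import all_classical all_reals all_analysis.
From mathcomp Require Import ring lra.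
Import Order.TTheory GRing.Theory Num.Theory.
Import numFieldNormedType.Exports.
Local Open Scope classical_set_scope.
Local Open Scope ring_scope.

Definition dotm (R : realType) (n : nat) (u v : 'rV[R]_n) : R := (u *m v^T) ord0 ord0.
Arguments dotm {R n}.

Lemma dotmC (R : realType) (n : nat) (u v : 'rV[R]_n) : dotm u v = dotm v u.
Proof. by rewrite /dotm !mxE; apply: eq_bigr => i _; rewrite !mxE mulrC. Qed.

Lemma dotmDl (R : realType) (n : nat) (u v w : 'rV[R]_n) : dotm (u + v) w = dotm u w + dotm v w.
Proof. by rewrite /dotm mulmxDl mxE. Qed.

Lemma dotmDr (R : realType) (n : nat) (u v w : 'rV[R]_n) : dotm w (u + v) = dotm w u + dotm w v.
Proof. by rewrite dotmC dotmDl !(dotmC _ _ w). Qed.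

Lemma dotmZl (R : realType) (n : nat) (k : R) (u v : 'rV[R]_n) : dotm (k *: u) v = k * dotm u v.
Proof. by rewrite /dotm -scalemxAl mxE. Qed.

Lemma dotmZr (R : realType) (n : nat) (k : R) (u v : 'rV[R]_n) : dotm v (k *: u) = k * dotm v u.
Proof. by rewrite dotmC dotmZl dotmC. Qed.

Lemma dotmNl (R : realType) (n : nat) (u v : 'rV[R]_n) : dotm (- u) v = - dotm u v.
Proof. by rewrite -scaleN1r dotmZl mulN1r. Qed.

Lemma dotmNr (R : realType) (n : nat) (u v : 'rV[R]_n) : dotm v (- u) = - dotm v u.
Proof. by rewrite dotmC dotmNl dotmC. Qed.

Lemma dotmBl (R : realType) (n : nat) (u v w : 'rV[R]_n) : dotm (u - v) w = dotm u w - dotm v w.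
Proof. by rewrite dotmDl dotmNl. Qed.

Lemma dotmBr (R : realType) (n : nat) (u v w : 'rV[R]_n) : dotm w (u - v) = dotm w u - dotm w v.
Proof. by rewrite dotmDr dotmNr. Qed.

Lemma dotm_mul (R : realType) (n : nat) (u v : 'rV[R]_n) (M : 'M[R]_n) : dotm (u *m M) v = dotm u (v *m M^T).
Proof. by rewrite /dotm trmx_mul trmxK mulmxA. Qed.

Lemma dotmE (R : realType) (n : nat) (u v : 'rV[R]_n) : dotm u v = \sum_i u ord0 i * v ord0 i.
Proof. by rewrite /dotm mxE; apply: eq_bigr => i _; rewrite mxE. Qed.

Lemma dotm_ge0 (R : realType) (n : nat) (u : 'rV[R]_n) : 0 <= dotm u u.
Proof. by rewrite dotmE; apply: sumr_ge0 => i _; rewrite -expr2 sqr_ge0. Qed.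

Lemma dotm_eq0 (R : realType) (n : nat) (u : 'rV[R]_n) : dotm u u = 0 -> u = 0.
Proof.
rewrite dotmE => /eqP; rewrite psumr_eq0 => [/allP H|i _]; last by rewrite -expr2 sqr_ge0.
apply/rowP => i; rewrite mxE; apply/eqP.
by have := H i (mem_index_enum i); rewrite -expr2 sqrf_eq0.
Qed.

Lemma norm2E (R : realType) (n : nat) (u : 'rV[R]_n) : norm2 u = Num.sqrt (dotm u u).
Proof. by rewrite /norm2 dotmE; congr Num.sqrt; apply: eq_bigr => i _; rewrite expr2. Qed.

Lemma norm2_ge0 (R : realType) (n : nat) (u : 'rV[R]_n) : 0 <= norm2 u.
Proof. by rewrite norm2E sqrtr_ge0. Qed.

Lemma norm2_sq (R : realType) (n : nat) (u : 'rV[R]_n) : norm2 u ^+ 2 = dotm u u.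
Proof. by rewrite norm2E sqr_sqrtr // dotm_ge0. Qed.

Lemma cauchy_schwarz (R : realType) (n : nat) (u v : 'rV[R]_n) : dotm u v <= norm2 u * norm2 v.
Proof.
have [u0|] := eqVneq (dotm u u) 0.
  by rewrite (dotm_eq0 _ _ u u0) /dotm mul0mx mxE mulr_ge0 // norm2_ge0.
move=> Nu0; have Nupos : 0 < dotm u u by rewrite lt_neqAle eq_sym Nu0 dotm_ge0.
have H : 0 <= dotm (dotm u u *: v - dotm u v *: u) (dotm u u *: v - dotm u v *: u) by exact: dotm_ge0.
rewrite !(dotmBl, dotmBr, dotmZl, dotmZr) (dotmC _ _ v u) in H.
have H2 : dotm u v ^+ 2 <= dotm u u * dotm v v by nra.
apply: (le_trans (ler_norm _)).
rewrite -[leLHS]sqrtr_sqr !norm2E -sqrtrM ?dotm_ge0 // ler_sqrt //.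
by rewrite mulr_ge0 // dotm_ge0.
Qed.

Lemma norm2D (R : realType) (n : nat) (u v : 'rV[R]_n) : norm2 (u + v) <= norm2 u + norm2 v.
Proof.
rewrite -(ler_pXn2r (_ : (0 < 2)%N)) ?nnegrE ?addr_ge0 ?norm2_ge0 //.
rewrite norm2_sq dotmDl !dotmDr sqrrD !norm2_sq (dotmC _ _ v u).
have := cauchy_schwarz _ _ u v; lra.
Qed.

Lemma norm2Z (R : realType) (n : nat) (k : R) (u : 'rV[R]_n) : norm2 (k *: u) = `|k| * norm2 u.
Proof. by rewrite !norm2E dotmZl dotmZr mulrA sqrtrM ?sqr_ge0 // sqrtr_sqr. Qed.


Lemma dotm_row_mx (R : realType) n (a b c d : 'rV[R]_n) :
  dotm (row_mx a b) (row_mx c d) = dotm a c + dotm b d.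
Proof. by rewrite /dotm tr_row_mx mul_row_col mxE. Qed.

Lemma quad_cont (R : realType) n (A : 'M[R]_n) :
  continuous (fun x : 'rV[R]_n => dotm (x *m A) x).
Proof.
move=> x; apply: differentiable_continuous.
have -> : (fun x : 'rV[R]_n => dotm (x *m A) x) =
   \sum_(j < n) ((\sum_(k < n) ((fun y : 'rV[R]_n => y ord0 k) * (fun=> A k j)))
                  * (fun y : 'rV[R]_n => y ord0 j)).
  apply/funext => y; rewrite dotmE fct_sumE; apply: eq_bigr => j _.
  by rewrite /= mxE fct_sumE.
apply: differentiable_sum => j; apply: differentiableM; last exact: differentiable_coord.
apply: differentiable_sum => k; apply: differentiableM; first exact: differentiable_coord.
exact: differentiable_cst.
Qed.

Lemma rayleigh_min (R : realType) n (A : 'M[R]_n) : A^T = A ->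
  forall v : 'rV[R]_n, v != 0 ->
  exists mu, eigenvalue A mu /\ forall x, mu * dotm x x <= dotm (x *m A) x.
Proof.
move=> AT v v0.
pose Nf (x : 'rV[R]_n) := dotm x x.
pose Qf (x : 'rV[R]_n) := dotm (x *m A) x.
have cN : continuous Nf.
  have -> : Nf = (fun x => dotm (x *m 1%:M) x).
    by rewrite /Nf; apply: funext => y /=; rewrite mulmx1.
  exact: quad_cont.
have cQ : continuous Qf by exact: quad_cont.
pose S := [set x : 'rV[R]_n | Nf x = 1]%classic.
have Npos : forall x : 'rV[R]_n, x != 0 -> 0 < Nf x.
  move=> x x0; rewrite lt_neqAle dotm_ge0 andbT eq_sym; apply/negP => /eqP/dotm_eq0.
  by move/eqP; rewrite (negbTE x0).
have Nsc : forall (k : R) x, Nf (k *: x) = k ^+ 2 * Nf x.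
  by move=> k x; rewrite /Nf dotmZl dotmZr mulrA expr2.
have Qsc : forall (k : R) x, Qf (k *: x) = k ^+ 2 * Qf x.
  by move=> k x; rewrite /Qf -scalemxAl dotmZl dotmZr mulrA expr2.
have normS : forall x, x != 0 -> S ((Num.sqrt (Nf x))^-1 *: x).
  move=> x x0; rewrite /S /= Nsc exprVn sqr_sqrtr ?mulVf //.
    by rewrite gt_eqF // Npos.
  exact: dotm_ge0.
have S0 : S !=set0 by exists ((Num.sqrt (Nf v))^-1 *: v); exact: normS.
have cS : compact S.
  apply: (@subclosed_compact _ _ [set w : 'rV[R]_n | forall i, (fun=> `[-1, 1]%classic) i (w ord0 i)]%classic).
  - have -> : S = (Nf @^-1` [set 1])%classic by [].
    by apply: preimage_closed => [y _|]; [exact: cN | exact: closed_eq].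
  - by apply: (@rV_compact R n (fun=> `[-1, 1]%classic)) => _; exact: segment_compact.
  - move=> x /= Sx i; rewrite in_itv /=.
    have : x ord0 i ^+ 2 <= 1.
      rewrite -Sx /Nf dotmE (bigD1 i) //= -expr2 lerDl.
      by apply: sumr_ge0 => j _; rewrite -expr2 sqr_ge0.
    move=> h; apply/andP; split; nra.
have cQS : {within S, continuous Qf} by apply: continuous_subspaceT.
have [x0 Sx0 minx0] := EVT_min_rV S0 cS cQS.
move: Sx0; rewrite inE /S /= => Nx0.
pose mu := Qf x0.
have key : forall x, mu * Nf x <= Qf x.
  move=> x; have [->|x0'] := eqVneq x 0.
    by rewrite /Nf /Qf /dotm !mul0mx mxE mulr0.
  pose k := (Num.sqrt (Nf x))^-1.
  have h1 : mu <= Qf (k *: x) by apply: minx0; rewrite inE; exact: normS.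
  have h2 : k ^+ 2 * Nf x = 1 by have := normS x x0'; rewrite /S /= Nsc.
  rewrite Qsc in h1; have hN := Npos x x0'.
  have h3 : 0 <= (k ^+ 2 * Qf x - mu) * Nf x by apply: mulr_ge0; lra.
  have -> : Qf x = (k ^+ 2 * Nf x) * Qf x by rewrite h2 mul1r.
  nra.
exists mu; split => //.
pose B := A - mu%:M.
have BT : B^T = B by rewrite /B linearB /= tr_scalar_mx AT.
have QB : forall x, dotm (x *m B) x = Qf x - mu * Nf x.
  by move=> x; rewrite /B mulmxBr mul_mx_scalar dotmBl dotmZl.
have QBge : forall x, 0 <= dotm (x *m B) x by move=> x; rewrite QB subr_ge0.
pose y := x0 *m B.
have hsym : dotm (y *m B) x0 = dotm y y by rewrite dotm_mul BT.
have hsym2 : dotm (x0 *m B) y = dotm y y by [].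
have hexp : forall e, dotm ((x0 + e *: y) *m B) (x0 + e *: y) =
   dotm (x0 *m B) x0 + 2 * e * dotm y y + e ^+ 2 * dotm (y *m B) y.
  move=> e; rewrite mulmxDl -scalemxAl !(dotmDl, dotmDr, dotmZl, dotmZr) hsym hsym2.
  by rewrite expr2; ring.
have Q0 : dotm (x0 *m B) x0 = 0 by rewrite QB Nx0 mulr1 subrr.
pose c := dotm (y *m B) y.
have c0 : 0 <= c := QBge y.
pose d := c + 1.
have d0 : 0 < d by rewrite /d; lra.
pose e := - dotm y y / d.
have ed : e * d = - dotm y y by rewrite /e divfK // gt_eqF.
have H := QBge (x0 + e *: y); rewrite hexp Q0 add0r -/c in H.
have H2 : 0 <= d ^+ 2 * (2 * e * dotm y y + e ^+ 2 * c) by apply: mulr_ge0 => //; exact: sqr_ge0.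
have H3 : d ^+ 2 * (2 * e * dotm y y + e ^+ 2 * c) = - (dotm y y) ^+ 2 * (c + 2).
  have -> : d ^+ 2 * (2 * e * dotm y y + e ^+ 2 * c) = 2 * (e * d) * dotm y y * d + (e * d) ^+ 2 * c by ring.
  by rewrite ed /d; ring.
have yy0 : dotm y y = 0.
  rewrite H3 in H2; have Ny := dotm_ge0 _ _ y; nra.
have y0 : y = 0 by apply: dotm_eq0.
apply/eigenvalueP; exists x0.
  by move: y0; rewrite /y /B mulmxBr mul_mx_scalar => /eqP; rewrite subr_eq0 => /eqP.
apply/negP => /eqP x00; move: Nx0; rewrite x00 /Nf /dotm mul0mx mxE => /eqP.
by rewrite eq_sym oner_eq0.
Qed.

Lemma derive_lin (R : realType) (V W : normedModType R) (f : V -> W) (a v : V) :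
  (forall x y, f (x + y) = f x + f y) -> (forall (k : R) x, f (k *: x) = k *: f x) ->
  derivable f a v /\ 'D_v f a = f v.
Proof.
move=> fD fZ.
split.
  apply: (is_cvg_near_cst (f v)) => /=.
  near=> h.
  have h0 : h != 0 by near: h; exact: nbhs_dnbhs_neq.
  by rewrite /= fD addrK fZ scalerA mulVf // scale1r.
rewrite /derive; apply: lim_near_cst => /=; first exact: norm_hausdorff.
near=> h.
have h0 : h != 0 by near: h; exact: nbhs_dnbhs_neq.
by rewrite /= fD addrK fZ scalerA mulVf // scale1r.
Unshelve. all: by end_near. Qed.

Lemma partial_derivable (R : realType) n (U' : 'rV[R]_n -> 'rV[R]_n -> R) th om v :
  (forall p : 'rV[R]_n * 'rV[R]_n,
        differentiable (fun q : 'rV[R]_n * 'rV[R]_n => U' q.1 q.2) p) ->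
  derivable (fun x => U' x om) th v /\ derivable (fun y => U' th y) om v.
Proof.
move=> dU; split; apply: diff_derivable.
- have -> : (fun x => U' x om) = (fun q : 'rV[R]_n * 'rV[R]_n => U' q.1 q.2) \o (fun x => (x, om)) by [].
  apply: differentiable_comp; last exact: dU.
  apply: differentiable_pair; [exact: ex_diff | exact: differentiable_cst].
- have -> : (fun y => U' th y) = (fun q : 'rV[R]_n * 'rV[R]_n => U' q.1 q.2) \o (fun y => (th, y)) by [].
  apply: differentiable_comp; last exact: dU.
  apply: differentiable_pair; [exact: differentiable_cst | exact: ex_diff].
Qed.

Lemma grad_theta_utility (R : realType) n (C : 'M[R]_n) (U' : 'rV[R]_n -> 'rV[R]_n -> R) th om :
  (forall p : 'rV[R]_n * 'rV[R]_n,
        differentiable (fun q : 'rV[R]_n * 'rV[R]_n => U' q.1 q.2) p) ->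
  grad_theta (utility C U') th om = om *m C^T + grad_theta U' th om.
Proof.
move=> dU; apply/rowP => i; rewrite /grad_theta /grad !mxE.
have -> : (fun x => utility C U' x om) =
   (fun x => (x *m C *m om^T) ord0 ord0) + (fun x => U' x om) by [].
have hD : forall x y : 'rV[R]_n, ((x + y) *m C *m om^T) ord0 ord0 = (x *m C *m om^T) ord0 ord0 + (y *m C *m om^T) ord0 ord0.
  by move=> x y; rewrite !mulmxDl mxE.
have hZ : forall (k : R) (x : 'rV[R]_n), ((k *: x) *m C *m om^T) ord0 ord0 = k *: (x *m C *m om^T) ord0 ord0.
  by move=> k x; rewrite -!scalemxAl mxE.
have [dl vl] := @derive_lin R _ _ (fun x : 'rV[R]_n => (x *m C *m om^T) ord0 ord0) th (delta_mx ord0 i) hD hZ.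
rewrite deriveD //; last by case: (partial_derivable _ _ _ th om (delta_mx ord0 i) dU).
rewrite vl; congr (_ + _).
rewrite -mulmxA -rowE !mxE; apply: eq_bigr => j _; rewrite !mxE mulrC; congr (om _ _ * _); exact: val_inj.
Qed.

Lemma grad_omega_utility (R : realType) n (C : 'M[R]_n) (U' : 'rV[R]_n -> 'rV[R]_n -> R) th om :
  (forall p : 'rV[R]_n * 'rV[R]_n,
        differentiable (fun q : 'rV[R]_n * 'rV[R]_n => U' q.1 q.2) p) ->
  grad_omega (utility C U') th om = th *m C + grad_omega U' th om.
Proof.
move=> dU; apply/rowP => i; rewrite /grad_omega /grad !mxE.
have -> : (fun y => utility C U' th y) =
   (fun y => (th *m C *m y^T) ord0 ord0) + (fun y => U' th y) by [].
have hD : forall x y : 'rV[R]_n, (th *m C *m (x + y)^T) ord0 ord0 = (th *m C *m x^T) ord0 ord0 + (th *m C *m y^T) ord0 ord0.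
  by move=> x y; rewrite linearD mulmxDr mxE.
have hZ : forall (k : R) (x : 'rV[R]_n), (th *m C *m (k *: x)^T) ord0 ord0 = k *: (th *m C *m x^T) ord0 ord0.
  by move=> k x; rewrite linearZ -scalemxAr mxE.
have [dl vl] := @derive_lin R _ _ (fun y : 'rV[R]_n => (th *m C *m y^T) ord0 ord0) om (delta_mx ord0 i) hD hZ.
rewrite deriveD //; last by case: (partial_derivable _ _ _ th om (delta_mx ord0 i) dU).
rewrite vl; congr (_ + _).
rewrite trmx_delta -colE !mxE; apply: eq_bigr => j _; congr (th _ _ * _); exact: val_inj.
Qed.

Lemma limn_esup_le_ev (R : realType) (u : nat -> R) (B : R) :
  (forall e, 0 < e -> \forall k \near \oo, u k <= B + e) ->
  (limn_esup (fun t => (u t)%:E) <= B%:E)%E.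
Proof.
move=> H; apply/lee_addgt0Pr => e e0.
have [N _ HN] := H e e0.
rewrite /limn_esup /limf_esup.
apply: le_trans; first apply: ereal_inf_lbound.
  by exists [set k | (N <= k)%N] => //=; exists N.
apply: ge_ereal_sup => _ [k Nk <-].
by rewrite -EFinD lee_fin; apply: HN.
Qed.

Lemma sub_lem (R : realType) (V : zmodType) (x y X Y : V) : y = x - (X + Y) -> x - Y = y + X.
Proof. by move=> ->; rewrite opprD addrA addrAC subrK. Qed.

Lemma add_lem (R : realType) (V : zmodType) (x y X Y : V) : y = x + (X + Y) -> x + Y = y - X.
Proof. by move=> ->; rewrite addrA addrAC addrK. Qed.

Local Close Scope classical_set_scope.

Theorem theorem1 (R : realType) (c : R) (hc : 0 < c) :
  exists K : R, 0 < K /\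
  forall (n : nat) (C : 'M[R]_n) (U' : 'rV[R]_n -> 'rV[R]_n -> R)
         (r : R) (m H : nat) (lmax lmin : R)
         (theta omega : nat -> 'rV[R]_n),
    C \in unitmx ->
    is_lambda_max (C *m C^T) lmax ->
    is_lambda_min (C *m C^T) lmin ->
    0 < r -> (0 < m)%N -> (0 < H)%N ->
    (forall p : 'rV[R]_n * 'rV[R]_n,
        differentiable (fun q : 'rV[R]_n * 'rV[R]_n => U' q.1 q.2) p) ->
    (forall t : nat,
        norm2 (row_mx (grad_theta U' (theta t.+1) (omega t.+1))
                      (grad_omega U' (theta t.+1) (omega t.+1)))
          <= c * ntk_rate r m H) ->
    (forall t : nat,
        theta t.+1 = theta t - (1 / Num.sqrt lmax) *:
                       grad_theta (utility C U') (theta t.+1) (omega t.+1) /\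
        omega t.+1 = omega t + (1 / Num.sqrt lmax) *:
                       grad_omega (utility C U') (theta t.+1) (omega t.+1)) ->
    (limn_esup (fun t => (norm2 (row_mx (theta t) (omega t)))%:E)
      <= (K * (1 / (1 - 1 / Num.sqrt 2)) * ntk_rate r m H
            * (Num.sqrt lmax / lmin))%:E)%E.
Proof.
exists c; split => //.
move=> n C U' r m H lmax lmin theta omega Cu [eM maxM] [em minM] r0 m0 H0 dU gb dyn.
move/eigenvalueP: (em) => [v0 Ev0 v0n0].
have CTu : C^T \in unitmx by rewrite unitmx_tr.
have vC0 : forall x : 'rV[R]_n, x != 0 -> x *m C != 0.
  move=> x; apply: contra => /eqP h; apply/eqP.
  by rewrite -(mulmxK Cu x) h mul0mx.
have vCT0 : forall x : 'rV[R]_n, x != 0 -> x *m C^T != 0.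
  move=> x; apply: contra => /eqP h; apply/eqP.
  by rewrite -(mulmxK CTu x) h mul0mx.
have posdot : forall x : 'rV[R]_n, x != 0 -> 0 < dotm x x.
  move=> x x0; rewrite lt_neqAle dotm_ge0 andbT eq_sym; apply/negP => /eqP/dotm_eq0.
  by move/eqP; rewrite (negbTE x0).
have quadC : forall x, dotm (x *m (C *m C^T)) x = dotm (x *m C) (x *m C).
  by move=> x; rewrite mulmxA dotm_mul trmxK.
have quadCT : forall x, dotm (x *m (C^T *m C)) x = dotm (x *m C^T) (x *m C^T).
  by move=> x; rewrite mulmxA dotm_mul.
have lmin0 : 0 < lmin.
  have h2 := posdot _ (vC0 _ v0n0); rewrite -quadC Ev0 dotmZl in h2.
  by move: h2; rewrite pmulr_lgt0 // posdot.
have lmax0 : 0 < lmax by have := maxM _ em; lra.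
have symA1 : (C *m C^T)^T = C *m C^T by rewrite trmx_mul trmxK.
have symA2 : (C^T *m C)^T = C^T *m C by rewrite trmx_mul trmxK.
have [mu1 [e1 R1]] := rayleigh_min _ _ _ symA1 v0 v0n0.
have [mu2 [e2 R2]] := rayleigh_min _ _ _ symA2 v0 v0n0.
have mu1ge := minM _ e1.
have mu2ge : lmin <= mu2.
  apply: minM; move/eigenvalueP: e2 => [w Ew w0]; apply/eigenvalueP; exists (w *m C^T).
    by rewrite !mulmxA -(mulmxA w) Ew -scalemxAl.
  exact: vCT0 _ w0.
have Ray1 : forall x, lmin * dotm x x <= dotm (x *m C) (x *m C).
  move=> x; rewrite -quadC; apply: le_trans (R1 x).
  by apply: ler_wpM2r => //; exact: dotm_ge0.
have Ray2 : forall x, lmin * dotm x x <= dotm (x *m C^T) (x *m C^T).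
  move=> x; rewrite -quadCT; apply: le_trans (R2 x).
  by apply: ler_wpM2r => //; exact: dotm_ge0.
set sl := Num.sqrt lmax.
have sl0 : 0 < sl by rewrite sqrtr_gt0.
have sl2 : sl ^+ 2 = lmax by rewrite sqr_sqrtr // ltW.
set a := 1 / sl.
have a0 : 0 < a by rewrite divr_gt0.
have asl : a * sl = 1 by rewrite /a mul1r mulVf // gt_eqF.
set rate := ntk_rate r m H.
have rate0 : 0 <= rate.
  rewrite /rate /ntk_rate; apply: mulr_ge0; last exact: sqrtr_ge0.
  by apply: mulr_ge0; [apply: mulr_ge0|]; exact: powR_ge0.
set alpha := c * rate.
have alpha0 : 0 <= alpha by rewrite /alpha mulr_ge0 // ltW.
set sg := Num.sqrt (1 + a ^+ 2 * lmin).
have sg2 : sg ^+ 2 = 1 + a ^+ 2 * lmin.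
  by rewrite sqr_sqrtr // addr_ge0 // mulr_ge0 // ?sqr_ge0 // ltW.
have sg1 : 1 < sg.
  rewrite /sg -[X in X < _]sqrtr1 ltr_sqrt; last by rewrite addr_gt0 // mulr_gt0 // exprn_gt0.
  by rewrite ltrDl mulr_gt0 // exprn_gt0.
set s := fun t => norm2 (row_mx (theta t) (omega t)).
have s0 : forall t, 0 <= s t by move=> t; exact: norm2_ge0.
have step : forall t, sg * s t.+1 <= s t + a * alpha.
  move=> t; have [d1 d2] := dyn t.
  rewrite grad_theta_utility // -/sl -/a in d1.
  rewrite grad_omega_utility // -/sl -/a in d2.
  set gT := grad_theta U' (theta t.+1) (omega t.+1) in d1 d2 *.
  set gO := grad_omega U' (theta t.+1) (omega t.+1) in d1 d2 *.
  set th := theta t.+1 in d1 d2 *; set om := omega t.+1 in d1 d2 *.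
  rewrite scalerDr in d1; rewrite scalerDr in d2.
  have hu := sub_lem R _ _ _ _ _ d1; have hw := add_lem R _ _ _ _ _ d2.
  have N1 : norm2 (row_mx (theta t - a *: gT) (omega t + a *: gO)) <= s t + a * alpha.
    have -> : row_mx (theta t - a *: gT) (omega t + a *: gO) =
              row_mx (theta t) (omega t) + a *: row_mx (- gT) gO.
      by rewrite scale_row_mx add_row_mx scalerN.
    apply: le_trans (norm2D _ _ _ _) _; rewrite norm2Z (ger0_norm (ltW a0)).
    rewrite /s.
    rewrite lerD2l; apply: ler_wpM2l; first exact: ltW.
    have := gb t; rewrite -/gT -/gO -/rate -/alpha.
    suff -> : norm2 (row_mx (- gT) gO) = norm2 (row_mx gT gO) by [].
    by rewrite !norm2E !dotm_row_mx dotmNl dotmNr opprK.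
  have N2 : sg ^+ 2 * s t.+1 ^+ 2 <= norm2 (row_mx (theta t - a *: gT) (omega t + a *: gO)) ^+ 2.
    rewrite !norm2_sq !dotm_row_mx hu hw sg2 -/th -/om.
    rewrite !(dotmDl, dotmDr, dotmNl, dotmNr, dotmZl, dotmZr).
    have cr : dotm th (om *m C^T) = dotm om (th *m C) by rewrite -dotm_mul dotmC.
    have cr2 : dotm (om *m C^T) th = dotm om (th *m C) by rewrite dotmC cr.
    have cr3 : dotm (th *m C) om = dotm om (th *m C) by rewrite dotmC.
    rewrite ?cr ?cr2 ?cr3.
    have h1 := Ray1 th; have h2 := Ray2 om.
    have h1' : a ^+ 2 * (lmin * dotm th th) <= a ^+ 2 * dotm (th *m C) (th *m C).
      by apply: ler_wpM2l => //; exact: sqr_ge0.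
    have h2' : a ^+ 2 * (lmin * dotm om om) <= a ^+ 2 * dotm (om *m C^T) (om *m C^T).
      by apply: ler_wpM2l => //; exact: sqr_ge0.
    rewrite expr2 in h1' h2' *; nra.
  have sg0 : 0 <= sg by apply: ltW; apply: lt_trans sg1.
  have l0 : 0 <= sg * s t.+1 by rewrite mulr_ge0.
  have r0' : 0 <= s t + a * alpha by rewrite addr_ge0 // mulr_ge0 // ltW.
  rewrite -(ler_pXn2r (_ : (0 < 2)%N)) ?nnegrE //.
  rewrite exprMn; apply: le_trans N2 _.
  by rewrite ler_pXn2r ?nnegrE ?norm2_ge0.
set k2 := 1 / (1 - 1 / Num.sqrt 2).
set T := c * k2 * rate * (sl / lmin).
have k2ge : sg + 1 <= k2.
  pose r2 := Num.sqrt (2 : R).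
  have r2pos : 0 < r2 by rewrite sqrtr_gt0.
  have r22 : r2 ^+ 2 = 2 by rewrite sqr_sqrtr.
  have asq : a ^+ 2 * lmax = 1 by rewrite -sl2 -exprMn asl expr1n.
  have sgr2 : sg <= r2.
    rewrite /sg /r2 ler_sqrt //.
    have : a ^+ 2 * lmin <= a ^+ 2 * lmax by apply: ler_wpM2l; [exact: sqr_ge0 | exact: maxM].
    lra.
  pose ir := 1 / r2 : R.
  have irr : ir * r2 = 1 by rewrite /ir mul1r mulVf // gt_eqF.
  have ir0 : 0 < ir by rewrite /ir divr_gt0.
  have ir1 : ir < 1 by nra.
  rewrite /k2 -/r2 -/ir ler_pdivlMr ?subr_gt0 //.
  nra.
have E : (sg - 1) * (sg + 1) * (sl / lmin) = a.
  have -> : (sg - 1) * (sg + 1) = sg ^+ 2 - 1 by ring.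
  rewrite sg2 (_ : 1 + a ^+ 2 * lmin - 1 = a ^+ 2 * lmin); last by ring.
  rewrite /a; field; rewrite ?gt_eqF //.
have sgm1 : 0 <= sg - 1 by rewrite subr_ge0 ltW.
have P0 : 0 <= (sg - 1) * (sl / lmin) * alpha.
  by rewrite mulr_ge0 // mulr_ge0 // divr_ge0 // ltW.
have hT : a * alpha <= (sg - 1) * T.
  rewrite -E.
  have -> : (sg - 1) * (sg + 1) * (sl / lmin) * alpha = ((sg - 1) * (sl / lmin) * alpha) * (sg + 1) by ring.
  have -> : (sg - 1) * T = ((sg - 1) * (sl / lmin) * alpha) * k2 by rewrite /T /alpha; ring.
  exact: ler_wpM2l.
have T0 : 0 <= T.
  rewrite /T mulr_ge0 // ?divr_ge0 ?(ltW sl0) ?(ltW lmin0) // mulr_ge0 // mulr_ge0 ?(ltW hc) //.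
  apply: le_trans k2ge; rewrite addr_ge0 //; apply: ltW; exact: lt_trans sg1.
set z := sg^-1.
have sgpos : 0 < sg by apply: lt_trans sg1.
have hz : sg * z = 1 by rewrite /z mulfV // gt_eqF.
have z0 : 0 <= z by rewrite /z invr_ge0 ltW.
have bound : forall t, s t <= T + s 0%N * z ^+ t.
  elim=> [|t IH]; first by rewrite expr0 mulr1 lerDr.
  rewrite -(ler_pM2l sgpos); apply: le_trans (step t) _.
  rewrite mulrDr exprS (_ : sg * (s 0%N * (z * z ^+ t)) = s 0%N * z ^+ t * (sg * z)); last by ring.
  rewrite hz mulr1.
  have : (sg - 1) * T = sg * T - T by ring.
  lra.
have z1 : `|z| < 1.
  by rewrite ger0_norm // /z invf_lt1.
apply: (@limn_esup_le_ev R s) => e e0.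
set eps := e / (s 0%N + 1).
have s01 : 0 < s 0%N + 1 by rewrite ltr_wpDl.
have eps0 : 0 < eps by rewrite divr_gt0.
have epsE : eps * (s 0%N + 1) = e by rewrite /eps divfK // gt_eqF.
have := cvgr0_norm_lt _ (cvg_expr z1) _ eps0.
move=> Hev; near=> k.
have hk : `|z ^+ k| < eps by near: k; exact: Hev.
have zk0 : 0 <= z ^+ k by rewrite exprn_ge0.
rewrite ger0_norm // in hk.
apply: le_trans (bound k) _; rewrite lerD2l.
have : s 0%N * z ^+ k <= s 0%N * eps by apply: ler_wpM2l => //; exact: ltW.
have := s0 0%N.
nra.
Unshelve. all: by end_near. Qed.
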